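(* In the allocation problem and Synchronized Greedy (SG) mechanism described in the context, let $S$ be a set of agents with $\min_j q_j\ge \sum_{i\in S} r_i$. Then there is no bid profile $\sigma$ with $\sigma_{i}=\pi_{i}$ for all $i\notin S$ such that $a^\sigma_{i*}$ is weakly preferred to $a^\pi_{i*}$ by every $i\in S$ (i.e., $a^\sigma_{i*}=a^\pi_{i*}$ or $a^\sigma_{i*}>_i a^\pi_{i*}$) and $a^\sigma_{i*}>_i a^\pi_{i*}$ for at least one $i\in S$. That is, SG is group strategy-proof against the family of all such coalitions $S$.
   Context: There are $m$ distinct divisible goods; good $j$ is available in amount $q_j>0$. There are $n$ agents; agent $i$ is to receive a total of $r_i>0$, with $\sum_j q_j=\sum_i r_i$. An allocation is a family $a_{ij}\ge 0$ with $\sum_j a_{ij}=r_i$ and $\sum_i a_{ij}=q_j$; $a_{i*}=(a_{i1},\ldots,a_{im})$ is agent $i$'s share. Each agent $i$ has a true preference list $\pi_i$, a permutation of the goods ($\pi_i(1)$ most preferred); $\pi=(\pi_1,\ldots,\pi_n)$. Agent $i$ prefers $a_{i*}$ to $b_{i*}$, written $a_{i*}>_i b_{i*}$, if the leftmost nonzero coordinate of $(a_{i\pi_i(\ell)}-b_{i\pi_i(\ell)})_{\ell=1}^m$ is positive. The SG mechanism: each agent $i$ bids a permutation $\sigma_i$ of the goods; over time $t\in[0,1]$ each agent $i$ receives, at rate $r_i$, the good highest in $\sigma_i$ among those not yet exhausted (a good is exhausted when the total amount handed out equals $q_j$; several agents may receive a good simultaneously; upon exhaustion, agents receiving it switch instantly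 to their next non-exhausted good). $a^\sigma_{ij}$ is the total amount of good $j$ agent $i$ receives under bid profile $\sigma$. *)

(* Defs.v *)
From HB Require Import structures.
From mathcomp Require Import all_boot all_order all_algebra all_fingroup.
Set Implicit Arguments. Unset Strict Implicit. Unset Printing Implicit Defensive.
Import Order.TTheory GRing.Theory Num.Theory.
Local Open Scope ring_scope.

(* Goods are 'I_m, agents are 'I_n.  A preference list / bid is a
   permutation p : {perm 'I_m}; p l is the good ranked at position l
   (position 0 = most preferred). *)

Section SG.
Variables (R : realFieldType) (m n : nat).

Definition sg_current (sig : {perm 'I_m}) (rem : 'I_m -> R) : option 'I_m :=
  ohead [seq j <- [seq sig l | l <- enum 'I_m] | 0 < rem j].

Definition sg_state := (R * ('I_m -> R) * ('I_n -> 'I_m -> R))%type.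

(* One phase of the SG process: between two consecutive exhaustion events
   (or until time 1), every agent receives its current good at rate r i. *)
Definition sg_step (r : 'I_n -> R) (sig : 'I_n -> {perm 'I_m})
    (st : sg_state) : sg_state :=
  let: (t, rem, acc) := st in
  let rho j := \sum_(i < n | sg_current (sig i) rem == Some j) r i in
  let d := \big[Num.min/(1 - t)]_(j < m | 0 < rho j) (rem j / rho j) in
  (t + d, fun j => rem j - d * rho j,
   fun i j => acc i j + (if sg_current (sig i) rem == Some j then d * r i else 0)).

(* Each phase ends at time 1 or exhausts at least one good, so m.+1 phases
   run the process to completion (further phases change nothing). *)
Definition sg_alloc (q : 'I_m -> R) (r : 'I_n -> R) (sig : 'I_n -> {perm 'I_m})
    : 'I_n -> 'I_m -> R :=
  (iter m.+1 (sg_step r sig) (0, q, fun _ _ => 0)).2.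

Definition lex_prefers (p : {perm 'I_m}) (a b : 'I_m -> R) : Prop :=
  exists l : 'I_m, (forall k : 'I_m, (k < l)%N -> a (p k) = b (p k))
                   /\ b (p l) < a (p l).

Definition weakly_prefers (p : {perm 'I_m}) (a b : 'I_m -> R) : Prop :=
  (forall j, a j = b j) \/ lex_prefers p a b.

End SG.

(* Main.v *)
Require Import Defs.
From HB Require Import structures.
From mathcomp Require Import all_boot all_order all_algebra all_fingroup.
From mathcomp Require Import ring lra.
Import Order.TTheory GRing.Theory Num.Theory.
Local Open Scope ring_scope.
Set Implicit Arguments. Unset Strict Implicit. Unset Printing Implicit Defensive.

Section PM.
Variables (R : realFieldType) (m : nat).
Implicit Types (phi : 'I_m -> R) (b : {perm 'I_m}).

Definition pm phi b (l : nat) : R :=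
  foldl Num.max 0 (take l [seq phi (b k) | k <- enum 'I_m]).

Lemma pm0 phi b : pm phi b 0 = 0.
Proof. by rewrite /pm take0. Qed.

Lemma pmS phi b (k : 'I_m) : pm phi b k.+1 = Num.max (pm phi b k) (phi (b k)).
Proof.
rewrite /pm (take_nth 0); last by rewrite size_map size_enum_ord ltn_ord.
by rewrite -cats1 foldl_cat /= (nth_map k) ?size_enum_ord ?ltn_ord // nth_ord_enum.
Qed.

Lemma pmS_ge phi b l : (m <= l)%N -> pm phi b l.+1 = pm phi b l.
Proof.
move=> ml; rewrite /pm !take_oversize // size_map size_enum_ord //.
exact: leqW.
Qed.

Lemma pm_ind phi b (P : nat -> R -> Prop) :
  P 0%N 0 ->
  (forall k : 'I_m, P k (pm phi b k) -> P k.+1 (Num.max (pm phi b k) (phi (b k)))) ->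
  (forall l, (m <= l)%N -> P l (pm phi b l) -> P l.+1 (pm phi b l)) ->
  forall l, P l (pm phi b l).
Proof.
move=> P0 PS PG; elim=> [|l IH]; first by rewrite pm0.
case: (ltnP l m) => hl.
  by have := PS (Ordinal hl) IH; rewrite -pmS.
by rewrite pmS_ge //; apply: PG.
Qed.

Lemma pm_ge0 phi b l : 0 <= pm phi b l.
Proof.
apply: (pm_ind (P := fun _ x => 0 <= x)) => //.
by move=> k h; rewrite le_max h.
Qed.

Lemma pm_mono phi b l : pm phi b l <= pm phi b l.+1.
Proof.
case: (ltnP l m) => hl.
  by rewrite (pmS _ _ (Ordinal hl)) le_max lexx.
by rewrite pmS_ge.
Qed.

Lemma pm_monoW phi b l l' : (l <= l')%N -> pm phi b l <= pm phi b l'.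
Proof.
move=> /subnK <-; elim: (l' - l)%N => [|d IH] //.
by rewrite addSn; apply: le_trans IH (pm_mono _ _ _).
Qed.

Lemma pm_elt phi b (k : 'I_m) l : (k < l)%N -> phi (b k) <= pm phi b l.
Proof.
move=> kl; apply: le_trans (pm_monoW _ _ kl).
by rewrite pmS le_max lexx orbT.
Qed.

Lemma pm_ub phi b T l : 0 <= T -> (forall k : 'I_m, (k < l)%N -> phi (b k) <= T) ->
  pm phi b l <= T.
Proof.
move=> T0; elim: l => [|l IH] H; first by rewrite pm0.
case: (ltnP l m) => hl.
  rewrite (pmS _ _ (Ordinal hl)) ge_max IH; last by move=> k kl; apply: H; exact: ltnW.
  by rewrite H.
rewrite pmS_ge // IH // => k kl; apply: H; exact: ltnW.
Qed.

Lemma pm_le phi phi' b l : (forall k : 'I_m, (k < l)%N -> phi (b k) <= phi' (b k)) ->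
  pm phi b l <= pm phi' b l.
Proof.
elim: l => [|l IH] H; first by rewrite !pm0.
case: (ltnP l m) => hl.
  rewrite !(pmS _ _ (Ordinal hl)) ge_max !le_max.
  rewrite IH ?H //=; last by move=> k kl; apply: H; exact: ltnW.
  by rewrite orbT.
by rewrite !pmS_ge // IH // => k kl; apply: H; exact: ltnW.
Qed.

Lemma pm_eq phi phi' b l : (forall k : 'I_m, (k < l)%N -> phi (b k) = phi' (b k)) ->
  pm phi b l = pm phi' b l.
Proof.
move=> H; apply/le_anti; rewrite !pm_le // => k kl; rewrite H //.
Qed.
End PM.

Section Alg.
Variables (R : realFieldType) (m : nat).
Implicit Types (phi : 'I_m -> R) (b : {perm 'I_m}).

Lemma maxmin_ineq (x y G : R) : y <= G -> 0 <= x ->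
  Num.max x y - x <= Num.min (Num.max x y) G - Num.min x G.
Proof.
move=> yG x0.
case: (leP x y) => h1; case: (leP y G) => h2 //; case: (leP x G) => h3; lra.
Qed.

Lemma minmono (x y G : R) : x <= y -> Num.min x G <= Num.min y G.
Proof. by move=> xy; case: (leP x G); case: (leP y G) => //; lra. Qed.

Definition run_form (a : 'I_m -> R) (ri : R) phi b :=
  forall k : 'I_m, a (b k) = ri * (Num.max (pm phi b k) (phi (b k)) - pm phi b k).

Lemma run_tele a ri phi b : run_form a ri phi b ->
  forall l, \sum_(k < m | (k < l)%N) a (b k) = ri * pm phi b l.
Proof.
move=> H; elim=> [|l IH].
  by rewrite pm0 mulr0 big_pred0 // => k.
case: (ltnP l m) => hl.
  rewrite (bigD1 (Ordinal hl)) //= H (pmS _ _ (Ordinal hl)) /=.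
  rewrite (eq_bigl (fun k : 'I_m => (k < l)%N)) ?IH; first by ring.
  move=> k /=; rewrite ltnS -val_eqE /= ltn_neqAle andbC.
  by case: (k <= l)%N; rewrite //= andbT.
rewrite pmS_ge // -IH; apply: eq_bigl => k.
by rewrite !(leq_trans (ltn_ord k)) // leqW.
Qed.

Lemma run_bound a ri phi b (A : pred 'I_m) G : run_form a ri phi b -> 0 <= ri ->
  0 <= G -> (forall g, A g -> phi g <= G) -> \sum_(g | A g) a g <= ri * G.
Proof.
move=> H r0 G0 HA.
rewrite (reindex_inj (@perm_inj _ b)) /=.
pose f (l : nat) := Num.min (pm phi b l) G.
apply: (@le_trans _ _ (\sum_(k < m | A (b k)) ri * (f k.+1 - f k))).
  apply: ler_sum => k Ak; rewrite H; apply: ler_wpM2l => //.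
  rewrite /f; case: (ltnP k m) => hk; last by move: hk; rewrite leqNgt ltn_ord.
  rewrite (pmS _ _ k); apply: maxmin_ineq; [exact: HA | exact: pm_ge0].
apply: (@le_trans _ _ (\sum_(k < m) ri * (f k.+1 - f k))).
  rewrite [X in _ <= X](bigID (fun k => A (b k))) /= lerDl sumr_ge0 // => k _.
  by rewrite mulr_ge0 // subr_ge0 /f minmono // pm_mono.
rewrite -mulr_sumr ler_wpM2l // -(big_mkord xpredT (fun k => f k.+1 - f k)).
rewrite telescope_sumr // /f pm0.
by rewrite (min_l G0) subr0 ge_min lexx orbT.
Qed.

Lemma run_ge0 a ri phi b g : run_form a ri phi b -> 0 <= ri -> 0 <= a g.
Proof.
move=> H r0; have := H (b^-1 g)%g; rewrite permKV => ->.
by rewrite mulr_ge0 // subr_ge0 le_max lexx.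
Qed.

Lemma run_le a ri phi b g : run_form a ri phi b -> 0 <= ri -> 0 <= phi g ->
  a g <= ri * phi g.
Proof.
move=> H r0 p0; have := H (b^-1 g)%g; rewrite permKV => ->.
apply: ler_wpM2l => //; have := pm_ge0 phi b (b^-1 g)%g.
by case: (leP (pm phi b (b^-1 g)%g) (phi g)) => _; lra.
Qed.
End Alg.

Section Min.
Variables (R : realFieldType) (I : eqType).
Implicit Types (s : seq I) (P : pred I) (F : I -> R).

Lemma bigmin_le_seed (x0 : R) s P F : \big[Num.min/x0]_(i <- s | P i) F i <= x0.
Proof.
apply: (big_rec (fun x => x <= x0)) => // i x _ h.
by rewrite ge_min h orbT.
Qed.

Lemma bigmin_le_term (x0 : R) s P F j : j \in s -> P j -> \big[Num.min/x0]_(i <- s | P i) F i <= F j.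
Proof.
elim: s => //= a s IH; rewrite inE big_cons => /orP [/eqP <- ->|js Pj].
  by rewrite ge_min lexx.
case: (P a); last exact: IH.
by rewrite ge_min IH ?orbT.
Qed.

Lemma bigmin_ge (x0 : R) s P F lb : lb <= x0 -> (forall i, P i -> lb <= F i) ->
  lb <= \big[Num.min/x0]_(i <- s | P i) F i.
Proof.
move=> h1 h2; apply: (big_rec (fun x => lb <= x)) => // i x Pi h.
by rewrite le_min h h2.
Qed.

Lemma bigmin_cases (x0 : R) s P F :
  \big[Num.min/x0]_(i <- s | P i) F i = x0 \/
  exists2 i, P i & \big[Num.min/x0]_(i <- s | P i) F i = F i.
Proof.
apply: (big_rec (fun x => x = x0 \/ exists2 i, P i & x = F i)); first by left.
move=> i x Pi h; case: (leP (F i) x) => _; first by right; exists i.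
exact: h.
Qed.
End Min.

Section Cur.
Variables (R : realFieldType) (m : nat).

Lemma ohead_filter (T : eqType) (a : pred T) (s : seq T) g :
  ohead (filter a s) = Some g -> has a s /\ g = nth g s (find a s).
Proof.
elim: s => //= x s IH; case: ifP => ax /=; first by case=> ->.
by move/IH.
Qed.

Lemma cur_none (sig : {perm 'I_m}) (rem : 'I_m -> R) :
  sg_current sig rem = None -> forall j, ~~ (0 < rem j).
Proof.
rewrite /sg_current => h j; apply/negP => hj.
suff : has (fun j => 0 < rem j) [seq sig l | l <- enum 'I_m].
  by rewrite has_filter; case: (filter _ _) h.
apply/hasP; exists j => //; apply/mapP; exists (sig^-1 j)%g; rewrite ?mem_enum //.
by rewrite permKV.
Qed.

Lemma cur_some (sig : {perm 'I_m}) (rem : 'I_m -> R) g :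
  sg_current sig rem = Some g -> exists k0 : 'I_m,
  [/\ g = sig k0, 0 < rem (sig k0) & forall k : 'I_m, (k < k0)%N -> ~~ (0 < rem (sig k))].
Proof.
rewrite /sg_current => /ohead_filter [hh hg].
set s := [seq sig l | l <- enum 'I_m] in hh hg.
have hf : (find (fun j => (0 < rem j)%R) s < m)%N.
  by move: hh; rewrite has_find size_map size_enum_ord.
have nthE : forall k : 'I_m, nth g s k = sig k.
  by move=> k; rewrite (nth_map k) ?size_enum_ord ?ltn_ord // nth_ord_enum.
have hg' : g = sig (Ordinal hf) by rewrite hg -nthE.
exists (Ordinal hf); split => //.
  by rewrite -hg'; move: hh => /(nth_find g); rewrite -hg.
move=> k hk; rewrite -nthE.
by rewrite (before_find _ hk).
Qed.

Lemma cur_pos (sig : {perm 'I_m}) (rem : 'I_m -> R) g :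
  sg_current sig rem = Some g -> 0 < rem g.
Proof. by move/cur_some => [k0 [-> ? _]]. Qed.
End Cur.

Section Step.
Variables (R : realFieldType) (m n : nat) (q : 'I_m -> R) (r : 'I_n -> R).
Variable b : 'I_n -> {perm 'I_m}.
Hypothesis hr : forall i, 0 < r i.

Definition Inv (st : sg_state R m n) : Prop :=
  let: (t, rem, acc) := st in
  [/\ 0 <= t <= 1, (forall j, 0 <= rem j), (forall j, rem j = q j - \sum_i acc i j) &
   exists phi : 'I_m -> R, [/\ forall j, 0 <= phi j <= t,
      forall j, 0 < rem j -> phi j = t &
      forall i, run_form (acc i) (r i) phi (b i)]].

Lemma step_inv st : Inv st -> Inv (sg_step r b st).
Proof.
case: st => [[t rem] acc] [/andP [t0 t1] rem0 cons [phi [phiB phiT form]]].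
rewrite /sg_step.
set cur := fun i => sg_current (b i) rem.
set rho := fun j => \sum_(i < n | sg_current (b i) rem == Some j) r i.
set d := \big[Num.min/(1 - t)]_(j < m | 0 < rho j) (rem j / rho j).
have rho0 j : 0 <= rho j by apply: sumr_ge0 => i _; exact: ltW.
have rhopos j : 0 < rho j -> 0 < rem j.
  move=> hj; apply: contraTT hj => hn.
  rewrite /rho big_pred0 ?ltxx // => i; apply/negP => /eqP /cur_pos h.
  by move: hn; rewrite h.
have d0 : 0 <= d.
  apply: bigmin_ge; first by rewrite subr_ge0.
  by move=> j hj; rewrite divr_ge0 // ltW.
have d1 : d <= 1 - t by apply: bigmin_le_seed.
have drho j : d * rho j <= rem j.
  have [hj|hj] := boolP (0 < rho j).
    rewrite -ler_pdivlMr //; apply: bigmin_le_term => //.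
  have -> : rho j = 0 by apply/le_anti; rewrite rho0 andbT leNgt.
  by rewrite mulr0.
clearbody d.
rewrite /Inv; split.
- rewrite addr_ge0 //=; rewrite -lerBrDl. exact: d1.
- by move=> j; rewrite subr_ge0; exact: drho.
- move=> j; rewrite big_split /= cons.
  rewrite -big_mkcond /= -mulr_sumr -/(rho j); ring.
exists (fun j => if 0 < rem j then t + d else phi j); split.
- move=> j; case: ifP => _; first lra.
  by have := phiB j; case/andP => ? ?; lra.
- move=> j hj; have h1 := mulr_ge0 d0 (rho0 j); move: hj; rewrite -/(rho j) => hj.
  by have -> : 0 < rem j by lra.
move=> i k; rewrite -/(cur i).
case hc : (cur i) => [g|].
- have [k0 [hg hk0 hbef]] := cur_some hc.
  have hind : (Some g == Some (b i k)) = (k0 == k).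
    by rewrite hg; apply/eqP/eqP => [[/perm_inj]|->].
  rewrite hind.
  have pmt : forall l, pm phi (b i) l <= t.
    by move=> l; apply: pm_ub => [|k' _]; [lra | case/andP: (phiB (b i k'))].
  have pmt' : forall l, pm (fun j => if 0 < rem j then t + d else phi j) (b i) l <= t + d.
    move=> l; apply: pm_ub => [|k' _]; first lra.
    by case: ifP => _; [lra | case/andP: (phiB (b i k')) => ? ?; lra].
  have pmeq : forall l, (l <= k0)%N ->
      pm (fun j => if 0 < rem j then t + d else phi j) (b i) l = pm phi (b i) l.
    move=> l hl; apply: pm_eq => k' hk'.
    by rewrite (negbTE (hbef _ (leq_trans hk' hl))).
  case: (ltngtP k k0) => hkk.
  + rewrite (negbTE (hbef _ hkk)) (pmeq _ (ltnW hkk)) (form i k).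
    have -> : (k0 == k) = false by apply/eqP => hh; move: hkk; rewrite hh ltnn.
    by rewrite addr0.
  + have -> : (k0 == k) = false by apply/eqP => hh; move: hkk; rewrite hh ltnn.
    rewrite addr0 (form i k).
    have e1 : pm phi (b i) k = t.
      by apply/le_anti; rewrite pmt -(phiT _ hk0) pm_elt.
    have e2 : pm (fun j => if 0 < rem j then t + d else phi j) (b i) k = t + d.
      apply/le_anti; rewrite pmt' /=.
      by have := pm_elt (fun j => if 0 < rem j then t + d else phi j) (b i) hkk; rewrite hk0.
    rewrite e1 e2 !max_l ?subrr //.
      by case: ifP => _; [lra | case/andP: (phiB (b i k)) => ? ?; lra].
    by case/andP: (phiB (b i k)).
  + have hkv : k = k0 by apply: val_inj.
    subst k; rewrite eqxx (pmeq _ (leqnn _)) (form i k0) hk0 (phiT _ hk0).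
    have := pmt k0; have := pm_ge0 phi (b i) k0 => ha hb.
    rewrite !max_r //; first ring.
    lra.
- have hn := cur_none hc.
  have -> : (None == Some (b i k)) = false by [].
  rewrite addr0 (form i k); congr (_ * (Num.max _ _ - _)).
  + by apply: pm_eq => k' _; rewrite (negbTE (hn _)).
  + by rewrite (negbTE (hn _)).
  + by apply: pm_eq => k' _; rewrite (negbTE (hn _)).
Qed.
End Step.

Section Cnt.
Variables (R : realFieldType) (m n : nat) (q : 'I_m -> R) (r : 'I_n -> R).
Variable b : 'I_n -> {perm 'I_m}.
Hypothesis hr : forall i, 0 < r i.
Hypothesis hq : forall j, 0 < q j.

Definition Cnt (k : nat) (st : sg_state R m n) : Prop :=
  let: (t, rem, acc) := st in t = 1 \/ (k <= #|[set j | (rem j == 0)%R]|)%N.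

Lemma step_cnt st k : Inv q r b st -> Cnt k st -> Cnt k.+1 (sg_step r b st).
Proof.
case: st => [[t rem] acc] [/andP [t0 t1] rem0 cons _] hc.
rewrite /sg_step.
set rho := fun j => \sum_(i < n | sg_current (b i) rem == Some j) r i.
set d := \big[Num.min/(1 - t)]_(j < m | 0 < rho j) (rem j / rho j).
have rho0 j : 0 <= rho j by apply: sumr_ge0 => i _; exact: ltW.
have rhopos j : 0 < rho j -> 0 < rem j.
  move=> hj; apply: contraTT hj => hn.
  rewrite /rho big_pred0 ?ltxx // => i; apply/negP => /eqP /cur_pos h.
  by move: hn; rewrite h.
have d0 : 0 <= d.
  apply: bigmin_ge; first by rewrite subr_ge0.
  by move=> j hj; rewrite divr_ge0 // ltW.
have d1 : d <= 1 - t by apply: bigmin_le_seed.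
have dc := bigmin_cases (1 - t) (index_enum 'I_m) (fun j => 0 < rho j) (fun j => rem j / rho j).
rewrite -/d in dc; clearbody d.
rewrite /Cnt.
case: hc => [ht|hk].
  by left; lra.
case: dc => [hd|[j0 hj0 hd]].
  by left; rewrite hd; ring.
right.
have hrem0 : rem j0 - d * rho j0 == 0.
  by rewrite hd divfK ?subrr // gt_eqF.
apply: (@leq_trans #|j0 |: [set j | (rem j == 0)%R]|).
  by rewrite cardsU1 inE gt_eqF ?rhopos //= add1n ltnS.
apply: subset_leq_card; apply/subsetP => j; rewrite !inE.
case/orP => [/eqP -> //|/eqP hj].
rewrite -/(rho j).
have -> : rho j = 0.
  apply/le_anti; rewrite rho0 andbT leNgt; apply/negP => /rhopos.
  by rewrite hj ltxx.
by rewrite hj mulr0 subrr.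
Qed.

Definition init_st : sg_state R m n := (0, q, fun _ _ => 0).

Lemma iter_inv k : Inv q r b (iter k (sg_step r b) init_st) /\
                   Cnt k (iter k (sg_step r b) init_st).
Proof.
elim: k => [|k [IH1 IH2]].
  split; last by right.
  rewrite /= /Inv; split.
  - by rewrite lexx ler01.
  - by move=> j; exact: ltW.
  - by move=> j; rewrite big1 // subr0.
  exists (fun _ => 0); split => //.
  - by move=> j; rewrite lexx.
  - move=> i k; have h0 : pm (fun _ : 'I_m => 0 : R) (b i) k = 0.
      by apply/le_anti; rewrite pm_ge0 andbT pm_ub.
    by rewrite h0 maxxx subrr mulr0.
rewrite iterS; split; [exact: step_inv | exact: step_cnt].
Qed.

Lemma run_exists : exists F : 'I_m -> R,
  [/\ forall j, 0 <= F j <= 1,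
      forall i, run_form (sg_alloc q r b i) (r i) F (b i),
      forall j, \sum_i sg_alloc q r b i j <= q j &
      forall j, F j < 1 -> \sum_i sg_alloc q r b i j = q j].
Proof.
have [h1 h2] := iter_inv m.+1.
rewrite /sg_alloc -/init_st.
move: h1 h2; case: (iter m.+1 (sg_step r b) init_st) => [[t rem] acc] /=.
move=> [/andP [t0 t1] rem0 cons [phi [phiB phiT form]]] hc.
have ht : t = 1.
  case: hc => // hc; exfalso.
  move: (max_card (mem [set j | (rem j == 0)%R])); rewrite card_ord => hh.
  by have := leq_trans hc hh; rewrite ltnn.
subst t.
exists phi; split => //.
- move=> j; have := cons j; have := rem0 j; lra.
- move=> j hj; have := cons j; suff -> : rem j = 0 by lra.
  apply/le_anti; rewrite rem0 andbT leNgt; apply/negP => /phiT h.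
  by move: hj; rewrite h ltxx.
Qed.
End Cnt.

Section UB.
Variables (R : realFieldType) (m : nat).

Lemma sum_split_last (f : 'I_m -> R) (k : 'I_m) :
  \sum_(k' < m | (k' < k.+1)%N) f k' = \sum_(k' < m | (k' < k)%N) f k' + f k.
Proof.
rewrite (bigD1 k) //= addrC; congr (_ + _); apply: eq_bigl => k' /=.
rewrite ltnS -val_eqE /= ltn_neqAle andbC.
by case: (k' <= k)%N; rewrite //= andbT.
Qed.

Lemma UB (aS aP : 'I_m -> R) ri (F E : 'I_m -> R) (bS p : {perm 'I_m}) (k : 'I_m) :
  0 < ri -> run_form aS ri F bS -> run_form aP ri E p -> (forall j, 0 <= E j) ->
  (forall k' : 'I_m, (k' <= k)%N -> F (p k') <= E (p k')) ->
  (forall k' : 'I_m, (k' < k)%N -> aS (p k') = aP (p k')) ->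
  aS (p k) <= aP (p k).
Proof.
move=> r0 fS fP E0 hFE hpre.
have h1 := @run_bound _ _ aS ri F bS (fun g => ((p^-1)%g g <= k)%N)%g (pm E p k.+1) fS (ltW r0)
   (pm_ge0 _ _ _).
have h1' : \sum_(g | ((p^-1)%g g <= k)%N) aS g <= ri * pm E p k.+1.
  apply: h1 => g hg; rewrite -{1}(permKV p g).
  apply: le_trans (hFE _ hg) _; apply: pm_elt => /=.
  by rewrite ltnS.
rewrite (reindex_inj (@perm_inj _ p)) /= in h1'.
rewrite (eq_bigl (fun k' : 'I_m => (k' < k.+1)%N)) in h1'; last by move=> k'; rewrite /= permK ltnS.
rewrite -(run_tele fP) !sum_split_last in h1'.
rewrite (eq_bigr (fun k' => aP (p k'))) in h1'; last by move=> k' hk'; rewrite hpre.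
lra.
Qed.
End UB.

Unset Implicit Arguments.
Set Strict Implicit.

Theorem theorem3 (R : realFieldType) (m n : nat)
    (q : 'I_m -> R) (r : 'I_n -> R)
    (hq : forall j, 0 < q j) (hr : forall i, 0 < r i)
    (hsum : \sum_(j < m) q j = \sum_(i < n) r i)
    (pi : 'I_n -> {perm 'I_m}) (S : {set 'I_n})
    (hS : forall j : 'I_m, \sum_(i in S) r i <= q j) :
  ~ exists sigma : 'I_n -> {perm 'I_m},
      [/\ (forall i, i \notin S -> sigma i = pi i),
          (forall i, i \in S ->
             weakly_prefers (pi i) (sg_alloc q r sigma i) (sg_alloc q r pi i))
        & (exists2 i, i \in S &
             lex_prefers (pi i) (sg_alloc q r sigma i) (sg_alloc q r pi i))].
Proof.
move=> [sigma [hout hweak [i0 hi0 hstr]]].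
have [E [EB Eform Ele Eeq]] := run_exists pi hr hq.
have [F [FB Fform Fle Feq]] := run_exists sigma hr hq.
set aP := sg_alloc q r pi in Eform Ele Eeq hweak hstr.
set aS := sg_alloc q r sigma in Fform Fle Feq hweak hstr.
have E0 j : 0 <= E j by case/andP: (EB j).
have F1 j : F j <= 1 by case/andP: (FB j).
have [hD|hD] := boolP [exists j, E j < F j].
- case/existsP: hD => j1 hj1.
  case: (@arg_minP _ _ _ j1 (fun j => E j < F j) E hj1) => js hjs hmin.
  have hmin' j : E j < E js -> F j <= E j.
    move=> hj; rewrite leNgt; apply/negP => /hmin h.
    by have := lt_le_trans hj h; rewrite ltxx.
  have Ejs1 : E js < 1 by apply: lt_le_trans hjs (F1 js).
  have aPjs i : aP i js = r i * (Num.max (pm E (pi i) ((pi i)^-1 js)%g) (E js)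
                                  - pm E (pi i) ((pi i)^-1 js)%g).
    by have := Eform i ((pi i)^-1 js)%g; rewrite permKV.
  have aPpos i : 0 < aP i js -> pm E (pi i) ((pi i)^-1 js)%g < E js.
    rewrite aPjs => h; rewrite ltNge; apply/negP => hle.
    by move: h; rewrite max_l // subrr mulr0 ltxx.
  have nonS i : i \notin S -> aP i js <= aS i js /\ (0 < aP i js -> aP i js < aS i js).
    move=> hi.
    have aSjs : aS i js = r i * (Num.max (pm F (pi i) ((pi i)^-1 js)%g) (F js)
                                  - pm F (pi i) ((pi i)^-1 js)%g).
      by have := Fform i ((pi i)^-1 js)%g; rewrite (hout i hi) permKV.
    have aS0 : 0 <= aS i js by apply: (run_ge0 _ (Fform i)); exact: ltW.
    have [hlt|hge] := ltP (pm E (pi i) ((pi i)^-1 js)%g) (E js); last first.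
      have -> : aP i js = 0 by rewrite aPjs max_l // subrr mulr0.
      by split => //; rewrite ltxx.
    have hPF : pm F (pi i) ((pi i)^-1 js)%g <= pm E (pi i) ((pi i)^-1 js)%g.
      apply: pm_le => k' hk'; apply: hmin'.
      by apply: le_lt_trans hlt; apply: pm_elt.
    have hlt2 : aP i js < aS i js.
      rewrite aPjs aSjs (max_r (ltW hlt)) ltr_pM2l //.
      have hm : F js <= Num.max (pm F (pi i) ((pi i)^-1 js)%g) (F js).
        by rewrite le_max lexx orbT.
      lra.
    by split => //; exact: ltW.
  have [i1 hi1 hpos1] : exists2 i1, i1 \notin S & 0 < aP i1 js.
    case: (boolP [exists i, (i \notin S) && (0 < aP i js)]) => [/existsP [i /andP [h1 h2]]|hn].
      by exists i.
    exfalso; move/existsPn: hn => hn.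
    have hq1 := Eeq js Ejs1.
    rewrite (bigID (fun i => i \in S)) /= in hq1.
    have hA : \sum_(i | i \in S) aP i js <= \sum_(i | i \in S) r i * E js.
      by apply: ler_sum => i _; apply: (run_le (Eform i)); [exact: ltW | exact: E0].
    have hB : \sum_(i | i \notin S) aP i js <= \sum_(i | i \notin S) (0:R).
      by apply: ler_sum => i hi; move: (hn i); rewrite hi /= leNgt.
    rewrite [X in _ <= X]big1 // in hB.
    rewrite -mulr_suml in hA.
    have hC := ler_wpM2r (E0 js) (hS js).
    have hqp : q js * E js < q js by rewrite -{2}(mulr1 (q js)) ltr_pM2l.
    lra.
  have hlt : \sum_(i | i \in S) aS i js < \sum_(i | i \in S) aP i js.
    have h1 := Fle js; rewrite (bigID (fun i => i \in S)) /= in h1.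
    have h2 := Eeq js Ejs1; rewrite (bigID (fun i => i \in S)) /= in h2.
    have h3 : \sum_(i | i \notin S) aP i js < \sum_(i | i \notin S) aS i js.
      rewrite (bigD1 i1 hi1) [X in _ < X](bigD1 i1 hi1) /=.
      apply: ltr_leD; first exact: (nonS i1 hi1).2 hpos1.
      by apply: ler_sum => i /andP [hi _]; exact: (nonS i hi).1.
    lra.
  have [i' hi' hlt'] : exists2 i', i' \in S & aS i' js < aP i' js.
    case: (boolP [exists i, (i \in S) && (aS i js < aP i js)]) => [/existsP [i /andP [h1 h2]]|hn].
      by exists i.
    exfalso; move/existsPn: hn => hn.
    have : \sum_(i | i \in S) aP i js <= \sum_(i | i \in S) aS i js.
      by apply: ler_sum => i hi; move: (hn i); rewrite hi /= ltNge negbK.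
    lra.
  case: (hweak i' hi') => [heq|[l [hpre hl]]].
    by move: hlt'; rewrite heq ltxx.
  set kj := ((pi i')^-1 js)%g in aPpos.
  have hpj : pi i' kj = js by rewrite permKV.
  case: (ltngtP l kj) => hl_kj.
  + have hPE := aPpos i' (le_lt_trans (run_ge0 js (Fform i') (ltW (hr i'))) hlt').
    have hFE : forall k' : 'I_m, (k' <= l)%N -> F (pi i' k') <= E (pi i' k').
      move=> k' hk'; apply: hmin'; apply: le_lt_trans hPE.
      by apply: pm_elt; exact: leq_ltn_trans hk' hl_kj.
    have := UB (hr i') (Fform i') (Eform i') E0 hFE hpre.
    by rewrite leNgt hl.
  + have := hpre kj hl_kj; rewrite hpj => h.
    by move: hlt'; rewrite h ltxx.
  + have hlk : l = kj by apply: val_inj.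
    move: hl; rewrite hlk hpj => hl.
    by have := lt_trans hl hlt'; rewrite ltxx.
- move/existsPn: hD => hD.
  have hFE j : F j <= E j by rewrite leNgt; exact: hD.
  case: hstr => l [hpre hl].
  have := UB (hr i0) (Fform i0) (Eform i0) E0 (fun k' _ => hFE _) hpre.
  by rewrite leNgt hl.
Qed.
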